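(* Let $\mathbb{T}$ be a time scale and $\alpha\in(0,1]$. Let $f:\mathbb{R}\to\mathbb{R}$ be continuously differentiable and let $g:\mathbb{T}\to\mathbb{R}$ be continuous on $\mathbb{T}^k$. If $g$ is nabla fractional differentiable of order $\alpha$ at $t\in\mathbb{T}^k$, then $f\circ g:\mathbb{T}\to\mathbb{R}$ is nabla fractional differentiable of order $\alpha$ at $t$ and $$\nabla^{(\alpha)}(f\circ g)(t)=\int_0^1 f'\big(g(\rho(t))+\varphi\,(\nu(t))^{\alpha}\,\nabla^{(\alpha)}g(t)\big)\,d\varphi\cdot\nabla^{(\alpha)}g(t).$$
   Context: A time scale $\mathbb{T}$ is a nonempty closed subset of $\mathbb{R}$ with the relative topology. For $t\in\mathbb{T}$: $\rho(t)=\sup\{s\in\mathbb{T}:s<t\}$, $\sigma(t)=\inf\{s\in\mathbb{T}:s>t\}$, $\nu(t)=t-\rho(t)$. If $\mathbb{T}$ has a minimum $m$ with $\sigma(m)>m$ then $\mathbb{T}^k=\mathbb{T}\setminus\{m\}$, else $\mathbb{T}^k=\mathbb{T}$. $U_\delta(t)=(t-\delta,t+\delta)\cap\mathbb{T}$, $U^-_\delta(t)=(t-\delta,t)\cap\mathbb{T}$. Let $Q=\{1/q: q \text{ an odd positive integer}\}$; for $\alpha\in Q$, $x^\alpha$ is the real $q$-th root. Definition: $h:\mathbb{T}\to\mathbb{R}$ is nabla fractional differentiable of order $\alpha$ at $t\in\mathbb{T}^k$ if there is $L\in\mathbb{R}$ such that for every $\varepsilon>0$ there is $\delta>0$ with $|[h(\rho(t))-h(s)]-L[\rho(t)-s]^\alpha|\le\varepsilon|\rho(t)-s|^\alpha$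 for all $s\in U_\delta(t)$ if $\alpha\in Q$, resp. all $s\in U^-_\delta(t)$ if $\alpha\notin Q$; then $\nabla^{(\alpha)}h(t):=L$. *)

(* Defs.v *)
From Stdlib Require Import Reals.
From Coquelicot Require Import Coquelicot.
Open Scope R_scope.

Definition time_scale (T : R -> Prop) : Prop :=
  (exists x, T x) /\ closed T.

(* rho(t) = sup {s in T | s < t}; by the standard convention sup of the
   empty set is taken so that rho(t) = t (t = min T). *)
Definition rho (T : R -> Prop) (t : R) : R :=
  match Lub_Rbar (fun s => T s /\ s < t) with
  | Finite r => r
  | _ => t
  end.

(* sigma(t) = inf {s in T | s > t}; sigma(max T) = max T by convention. *)
Definition sigma (T : R -> Prop) (t : R) : R :=
  match Glb_Rbar (fun s => T s /\ t < s) with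
  | Finite r => r
  | _ => t
  end.

Definition nu (T : R -> Prop) (t : R) : R := t - rho T t.

Definition Tk (T : R -> Prop) (t : R) : Prop :=
  T t /\ ~ ((forall s, T s -> t <= s) /\ t < sigma T t).

Definition inQ (a : R) : Prop :=
  exists q : nat, Nat.odd q = true /\ a = / INR q.

(* x^a : for x > 0 the usual real power, 0^a = 0, and for x < 0 with a in Q
   the real odd root  -(-x)^a ; otherwise (never used) 0. *)
Definition fpow (a x : R) : R :=
  match Rlt_dec 0 x with
  | left _ => Rpower x a
  | right _ =>
      match Req_EM_T x 0 with
      | left _ => 0
      | right _ => - Rpower (- x) a
      end
  end.

Definition nabla_frac_diff (T : R -> Prop) (a : R) (h : R -> R) (t L : R)
  : Prop :=
  Tk T t /\
  forall eps : R, 0 < eps -> exists delta : R, 0 < delta /\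
    forall s : R, T s -> Rabs (s - t) < delta -> (inQ a \/ s < t) ->
      Rabs ((h (rho T t) - h s) - L * fpow a (rho T t - s))
        <= eps * fpow a (Rabs (rho T t - s)).

Definition cont_on_Tk (T : R -> Prop) (g : R -> R) : Prop :=
  forall t, Tk T t -> forall eps, 0 < eps -> exists delta, 0 < delta /\
    forall s, T s -> Rabs (s - t) < delta -> Rabs (g s - g t) < eps.

(* Main.v *)
Require Import Defs.
From Stdlib Require Import Reals Lra Classical.
From Coquelicot Require Import Coquelicot.
Open Scope R_scope.

Lemma rho_ub T t s : T s -> s < t -> s <= rho T t.
Proof.
  intros Hs Hst. unfold rho.
  pose proof (Lub_Rbar_correct (fun s => T s /\ s < t)) as [Hub _].
  destruct (Lub_Rbar (fun s => T s /\ s < t)) eqn:E.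
  - specialize (Hub s (conj Hs Hst)). simpl in Hub. exact Hub.
  - lra.
  - specialize (Hub s (conj Hs Hst)). simpl in Hub. contradiction.
Qed.

Lemma rho_le T t : rho T t <= t.
Proof.
  unfold rho.
  pose proof (Lub_Rbar_correct (fun s => T s /\ s < t)) as [_ Hl].
  destruct (Lub_Rbar (fun s => T s /\ s < t)) eqn:E; try lra.
  specialize (Hl (Finite t)). simpl in Hl. apply Hl.
  intros x [_ Hx]. simpl. lra.
Qed.

Lemma Rpower_pos x a : 0 < Rpower x a.
Proof. unfold Rpower. apply exp_pos. Qed.

Lemma fpow0 a : fpow a 0 = 0.
Proof.
  unfold fpow. destruct (Rlt_dec 0 0); [lra|].
  destruct (Req_EM_T 0 0); lra.
Qed.

Lemma fpow_odd a x : fpow a (- x) = - fpow a x.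
Proof.
  unfold fpow.
  destruct (Rlt_dec 0 (-x)); destruct (Rlt_dec 0 x); try lra;
  repeat match goal with |- context[Req_EM_T ?y 0] => destruct (Req_EM_T y 0) end;
  rewrite ?Ropp_involutive; try lra.
Qed.

Lemma fpow_abs a x : Rabs (fpow a x) = fpow a (Rabs x).
Proof.
  destruct (Rtotal_order x 0) as [H|[H|H]].
  - rewrite (Rabs_left x) by lra. replace x with (- (-x)) at 1 by ring.
    rewrite fpow_odd. unfold fpow.
    destruct (Rlt_dec 0 (-x)); try lra.
    rewrite Rabs_Ropp. apply Rabs_right. left; apply Rpower_pos.
  - subst. rewrite Rabs_R0, fpow0, Rabs_R0. reflexivity.
  - rewrite (Rabs_right x) by lra. unfold fpow.
    destruct (Rlt_dec 0 x); try lra. apply Rabs_right. left; apply Rpower_pos.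
Qed.

Lemma fpow_nonneg a x : 0 <= fpow a (Rabs x).
Proof. rewrite <- fpow_abs. apply Rabs_pos. Qed.

Definition Qf (f : R -> R) (u v : R) : R :=
  if Req_EM_T v u then Derive f u else (f v - f u) / (v - u).

Lemma Qf_eq f u v : f u - f v = Qf f u v * (u - v).
Proof.
  unfold Qf. destruct (Req_EM_T v u).
  - subst. ring.
  - field. intro; apply n; lra.
Qed.

Lemma Qf_int (f : R -> R) (u c : R) :
  (forall x, ex_derive f x) -> (forall x, continuous (Derive f) x) ->
  RInt (fun phi => Derive f (u + phi * c)) 0 1 = Qf f u (u + c).
Proof.
  intros Hd Hc. unfold Qf. destruct (Req_EM_T (u + c) u).
  - assert (c = 0) by lra. subst c.
    rewrite (RInt_ext _ (fun _ => Derive f u)).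
    + rewrite RInt_const. unfold scal; simpl; unfold mult; simpl. ring.
    + intros x _. f_equal. ring.
  - assert (c <> 0) by lra.
    apply is_RInt_unique.
    replace ((f (u + c) - f u) / (u + c - u)) with
      (minus ((fun p => f (u + p * c) / c) 1) ((fun p => f (u + p * c) / c) 0)).
    2: { unfold minus, plus, opp; simpl. replace (u + 1 * c) with (u + c) by ring.
         replace (u + 0 * c) with u by ring. replace (u + c - u) with c by ring. field; auto. }
    apply (is_RInt_derive (fun p => f (u + p * c) / c) (fun phi => Derive f (u + phi * c)) 0 1).
    + intros x _. auto_derive.
      * apply Hd.
      * change (Derive (fun x0 : R => f x0)) with (Derive f). field. auto.
    + intros x _. apply (continuous_comp (fun p => u + p * c) (Derive f)).
      * apply (continuous_plus (fun _ => u) (fun p => p * c)).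
        apply continuous_const.
        apply (continuous_mult (fun p => p) (fun _ => c)).
        apply continuous_id. apply continuous_const.
      * apply Hc.
Qed.

Lemma Qf_cont (f : R -> R) u v0 : (forall x, ex_derive f x) ->
  forall eps, 0 < eps -> exists eta, 0 < eta /\
    forall v, Rabs (v - v0) < eta -> Rabs (Qf f u v - Qf f u v0) < eps.
Proof.
  intros Hd eps Heps.
  destruct (Req_EM_T v0 u) as [E|NE].
  - subst v0.
    pose proof (Derive_correct f u (Hd u)) as D.
    apply is_derive_Reals in D.
    destruct (D eps Heps) as [delta Hdel].
    exists delta. split; [apply cond_pos|].
    intros v Hv. unfold Qf at 2. destruct (Req_EM_T u u); [|congruence].
    unfold Qf. destruct (Req_EM_T v u).
    + rewrite Rminus_diag, Rabs_R0. exact Heps.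
    + assert (v - u <> 0) by lra.
      specialize (Hdel (v - u) H Hv).
      replace (u + (v - u)) with v in Hdel by ring. exact Hdel.
  - assert (Hc : continuity_pt (fun v => (f v - f u) / (v - u)) v0).
    { apply (continuity_pt_div (fun v => f v - f u) (fun v => v - u)).
      - apply (continuity_pt_minus f (fun _ => f u)).
        + apply continuity_pt_filterlim. apply (ex_derive_continuous (K:=R_AbsRing) (V:=R_NormedModule) f). apply Hd.
        + apply continuity_pt_const. intros a b; reflexivity.
      - apply (continuity_pt_minus (fun v => v) (fun _ => u)).
        + apply continuity_pt_id.
        + apply continuity_pt_const. intros a b; reflexivity.
      - simpl. lra. }
    unfold continuity_pt, continue_in, limit1_in, limit_in in Hc.
    destruct (Hc eps Heps) as [alp [Halp H]].
    assert (Hpos : 0 < Rabs (v0 - u)) by (apply Rabs_pos_lt; lra).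
    exists (Rmin alp (Rabs (v0 - u))). split; [apply Rmin_pos; lra|].
    intros v Hv.
    assert (Hv1 : Rabs (v - v0) < alp) by (eapply Rlt_le_trans; [exact Hv|apply Rmin_l]).
    assert (Hv2 : Rabs (v - v0) < Rabs (v0 - u)) by (eapply Rlt_le_trans; [exact Hv|apply Rmin_r]).
    assert (Hvu : v <> u).
    { intro; subst v. rewrite <- Rabs_Ropp in Hv2. replace (- (u - v0)) with (v0 - u) in Hv2 by ring. lra. }
    unfold Qf. destruct (Req_EM_T v u); [congruence|]. destruct (Req_EM_T v0 u); [congruence|].
    destruct (Req_EM_T v v0).
    + subst. rewrite Rminus_diag, Rabs_R0. exact Heps.
    + apply (H v). split.
      * split; [exact I|]. auto.
      * simpl. unfold R_dist. exact Hv1.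
Qed.

Lemma zero_of_small X P : 0 <= P -> (forall e, 0 < e -> Rabs X <= e * P) -> X = 0.
Proof.
  intros HP H. destruct (Req_EM_T X 0) as [|n]; auto.
  assert (HX : 0 < Rabs X) by (apply Rabs_pos_lt; auto).
  specialize (H (Rabs X / (P + 1))).
  assert (0 < Rabs X / (P + 1)) by (apply Rdiv_lt_0_compat; lra).
  specialize (H H0).
  assert (Rabs X / (P + 1) * P < Rabs X).
  { unfold Rdiv. replace (Rabs X * / (P + 1) * P) with (Rabs X * (P / (P + 1))) by (field; lra).
    assert (P / (P + 1) < 1). { apply (Rmult_lt_reg_r (P + 1)); [lra|]. unfold Rdiv. rewrite Rmult_assoc, Rinv_l by lra. lra. }
    nra. }
  lra.
Qed.

Lemma g_conv T a g t D :
  cont_on_Tk T g -> Tk T t -> nabla_frac_diff T a g t D ->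
  forall eps, 0 < eps -> exists delta, 0 < delta /\
    forall s, T s -> Rabs (s - t) < delta -> (inQ a \/ s < t) ->
    Rabs (g s - (g (rho T t) + fpow a (nu T t) * D)) < eps.
Proof.
  intros Hc Ht [_ Hdf] eps Heps.
  destruct (Hc t Ht eps Heps) as [d1 [Hd1 Hcs]].
  destruct (classic (inQ a)) as [Q|NQ].
  - assert (E : g t = g (rho T t) + fpow a (nu T t) * D).
    { assert (Z : g (rho T t) - g t - D * fpow a (rho T t - t) = 0).
      { apply (zero_of_small _ (fpow a (Rabs (rho T t - t)))). apply fpow_nonneg.
        intros e He. destruct (Hdf e He) as [d [Hd Hs]].
        apply Hs. apply Ht. rewrite Rminus_diag, Rabs_R0. exact Hd. left; exact Q. }
      replace (rho T t - t) with (- nu T t) in Z by (unfold nu; ring).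
      rewrite fpow_odd in Z. lra. }
    exists d1. split; auto. intros s Hs Hst _. rewrite <- E. apply Hcs; auto.
  - destruct (Rle_lt_or_eq_dec _ _ (rho_le T t)) as [Lt|Eq].
    + exists (t - rho T t). split; [lra|]. intros s Hs Hst [Q|Hlt]; [contradiction|].
      pose proof (rho_ub T t s Hs Hlt). rewrite Rabs_left in Hst by lra. lra.
    + exists d1. split; auto. intros s Hs Hst _.
      unfold nu. rewrite Eq, Rminus_diag, fpow0, Rmult_0_l, Rplus_0_r. apply Hcs; auto.
Qed.

Theorem mainTheorem6 (T : R -> Prop) (a : R) (f g : R -> R) (t D : R) :
  time_scale T ->
  0 < a <= 1 ->
  (forall x, ex_derive f x) ->
  (forall x, continuous (Derive f) x) ->
  cont_on_Tk T g ->
  Tk T t ->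
  nabla_frac_diff T a g t D ->
  nabla_frac_diff T a (fun x => f (g x)) t
    (RInt (fun phi => Derive f (g (rho T t) + phi * fpow a (nu T t) * D)) 0 1
     * D).
Proof.
  intros _ _ Hd Hdc Hc Ht Hdf.
  set (u := g (rho T t)). set (c := fpow a (nu T t) * D).
  rewrite (RInt_ext _ (fun phi => Derive f (u + phi * c))).
  2: { intros x _. unfold u, c. rewrite Rmult_assoc. reflexivity. }
  rewrite (Qf_int f u c Hd Hdc).
  set (Q0 := Qf f u (u + c)).
  split; [exact Ht|].
  intros eps Heps.
  set (B := Rabs Q0 + 1).
  assert (HB : 0 < B) by (unfold B; pose proof (Rabs_pos Q0); lra).
  set (e1 := eps / (2 * B)).
  assert (He1 : 0 < e1) by (unfold e1; apply Rdiv_lt_0_compat; lra).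
  assert (HD : 0 < 2 * (Rabs D + 1)) by (pose proof (Rabs_pos D); lra).
  set (k1 := Rmin 1 (eps / (2 * (Rabs D + 1)))).
  assert (Hk1 : 0 < k1) by (unfold k1; apply Rmin_pos; [lra|apply Rdiv_lt_0_compat; lra]).
  destruct (Qf_cont f u (u + c) Hd k1 Hk1) as [eta [Heta Hq]].
  destruct (g_conv T a g t D Hc Ht Hdf eta Heta) as [d2 [Hd2 Hg]].
  destruct Hdf as [_ Hdf].
  destruct (Hdf e1 He1) as [d1 [Hd1 Hs1]].
  exists (Rmin d1 d2). split; [apply Rmin_pos; lra|].
  intros s Hs Hst Hor.
  assert (Hst1 : Rabs (s - t) < d1) by (eapply Rlt_le_trans; [exact Hst|apply Rmin_l]).
  assert (Hst2 : Rabs (s - t) < d2) by (eapply Rlt_le_trans; [exact Hst|apply Rmin_r]).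
  specialize (Hs1 s Hs Hst1 Hor).
  specialize (Hg s Hs Hst2 Hor). fold u c in Hg.
  specialize (Hq (g s) Hg). fold Q0 in Hq. fold u in Hs1.
  cbv beta. fold u. rewrite (Qf_eq f u (g s)).
  set (Qv := Qf f u (g s)) in *.
  set (F := fpow a (rho T t - s)) in *.
  set (P := fpow a (Rabs (rho T t - s))) in *.
  assert (HF : Rabs F = P) by (unfold F, P; apply fpow_abs).
  assert (HP : 0 <= P) by (unfold P; apply fpow_nonneg).
  set (X := u - g s - D * F) in *.
  replace (Qv * (u - g s) - Q0 * D * F) with (Qv * X + (Qv - Q0) * D * F) by (unfold X; ring).
  eapply Rle_trans; [apply Rabs_triang|].
  rewrite Rabs_mult, Rabs_mult, Rabs_mult, HF.
  assert (Hk1a : k1 <= 1) by apply Rmin_l.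
  assert (Hk1b : k1 <= eps / (2 * (Rabs D + 1))) by apply Rmin_r.
  assert (HQv : Rabs Qv <= B).
  { unfold B. replace Qv with (Q0 + (Qv - Q0)) by ring.
    pose proof (Rabs_triang Q0 (Qv - Q0)). lra. }
  assert (T1 : Rabs Qv * Rabs X <= eps / 2 * P).
  { replace (eps / 2 * P) with (B * (e1 * P)) by (unfold e1; field; lra).
    apply Rmult_le_compat; try apply Rabs_pos; auto. }
  assert (T2 : Rabs (Qv - Q0) * Rabs D * P <= eps / 2 * P).
  { apply Rmult_le_compat_r; auto.
    assert (Rabs (Qv - Q0) * Rabs D <= eps / (2 * (Rabs D + 1)) * Rabs D).
    { apply Rmult_le_compat_r; [apply Rabs_pos|lra]. }
    assert (eps / (2 * (Rabs D + 1)) * Rabs D <= eps / 2).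
    { unfold Rdiv. apply (Rmult_le_reg_r (2 * (Rabs D + 1))); auto.
      replace (eps * / (2 * (Rabs D + 1)) * Rabs D * (2 * (Rabs D + 1))) with (eps * Rabs D) by (field; lra).
      replace (eps * / 2 * (2 * (Rabs D + 1))) with (eps * Rabs D + eps) by field. lra. }
    lra. }
  lra.
Qed.
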